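(* Let $X_A, X_B, X_M$ be finite sets and let the notepads and the mailbox be purely classical: $\mathcal{A}=\mathcal{C}(X_A)$, $\mathcal{B}=\mathcal{C}(X_B)$, $\mathcal{M}=\mathcal{C}(X_M)$. Then for every $\epsilon<\tfrac12$ there is no pair of strategies $(\sigma_A,\sigma_B)\in\Sigma_A(\mathcal{A},\mathcal{M})\times\Sigma_B(\mathcal{B},\mathcal{M})$ which is a weak coin tossing protocol with bias $\epsilon$ (and consequently none which is a strong coin tossing protocol with bias $\epsilon$).
   Context: Observable algebras. For a finite set $X=\{1,\dots,n\}$, $\mathcal{C}(X)\subset\mathcal{B}(\mathbb{C}^n)$ denotes the algebra of operators diagonal in a fixed orthonormal basis $\{|x\rangle\}_{x\in X}$ (a classical system). A (finite-dimensional) observable algebra is an algebra of the form $\mathcal{B}(\mathcal{H})\otimes\mathcal{C}(X)$ with $\mathcal{H}$ finite-dimensional and $X$ finite (quantum if $X$ is a singleton, classical if $\dim\mathcal{H}=1$, hybrid otherwise), viewed as a subalgebra of $\mathcal{B}(\mathcal{H}\otimes\mathbb{C}^{|X|})$. States of a system with observable algebra $\mathcal{A}$ are density operators (positive, trace one) belonging to $\mathcal{A}$. Operations are completely positive trace-preserving linear maps between observable algebras. An observable with outcomes in a finite set $Y$ on $\mathcal{A}$ is a family $(E^{(y)})_{y\in Y}$ of positive elements of $\mathcal{A}$ summing to $\mathbb{1}$. Protocol framework. Fix an even number $N$ of rounds. Alice has a private algebra $\mathcal{A}$, Bob a private algebra $\mathcal{B}$, and both share a public ''mailbox'' algebra $\mathcal{M}$.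 A strategy of Alice is a tuple $\sigma_A=(\rho_A^{(0)};T_A^{(2)},T_A^{(4)},\dots,T_A^{(N)};E_A)$ where $\rho_A^{(0)}$ is a state on $\mathcal{A}\otimes\mathcal{M}$, each $T_A^{(j)}:\mathcal{A}\otimes\mathcal{M}\to\mathcal{A}\otimes\mathcal{M}$ is an operation, and $E_A=(E_A^{(0)},E_A^{(1)},E_A^{(\emptyset)})$ is an observable on $\mathcal{A}$ with outcomes $\{0,1,\emptyset\}$. A strategy of Bob is $\sigma_B=(\rho_B^{(0)};T_B^{(1)},T_B^{(3)},\dots,T_B^{(N-1)};E_B)$ with $\rho_B^{(0)}$ a state on $\mathcal{B}$, operations $T_B^{(k)}:\mathcal{M}\otimes\mathcal{B}\to\mathcal{M}\otimes\mathcal{B}$ and an observable $E_B=(E_B^{(0)},E_B^{(1)},E_B^{(\emptyset)})$ on $\mathcal{B}$. The sets of such strategies are denoted $\Sigma_A(\mathcal{A},\mathcal{M})$ and $\Sigma_B(\mathcal{B},\mathcal{M})$. Given $\sigma_A,\sigma_B$, set $\rho^{(0)}=\rho_A^{(0)}\otimes\rho_B^{(0)}$ on $\mathcal{A}\otimes\mathcal{M}\otimes\mathcal{B}$ and $\rho^{(N)}=(T_A^{(N)}\otimes\mathrm{Id}_{\mathcal{B}})(\mathrm{Id}_{\mathcal{A}}\otimes T_B^{(N-1)})\cdots(T_A^{(2)}\otimes\mathrm{Id}_{\mathcal{B}})(\mathrm{Id}_{\mathcal{A}}\otimes T_B^{(1)})\rho^{(0)}$, and for $a,b\in\{0,1,\emptyset\}$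 define $\mathbb{P}(\sigma_A,\sigma_B;a,b)=\operatorname{tr}[(E_A^{(a)}\otimes\mathbb{1}\otimes E_B^{(b)})\rho^{(N)}]$. Definitions. A pair $(\sigma_A,\sigma_B)\in\Sigma_A(\mathcal{A},\mathcal{M})\times\Sigma_B(\mathcal{B},\mathcal{M})$ is a (strong) coin tossing protocol with bias $\epsilon\in[0,1/2]$ if (i) $\mathbb{P}(\sigma_A,\sigma_B;0,0)=\mathbb{P}(\sigma_A,\sigma_B;1,1)=1/2$; (ii) for every finite-dimensional observable algebra $\mathcal{R}$, every $\sigma_A'\in\Sigma_A(\mathcal{R},\mathcal{M})$ and every $x\in\{0,1\}$, $\mathbb{P}(\sigma_A',\sigma_B;x,x)\le 1/2+\epsilon$; (iii) for every finite-dimensional observable algebra $\mathcal{R}$, every $\sigma_B'\in\Sigma_B(\mathcal{R},\mathcal{M})$ and every $x\in\{0,1\}$, $\mathbb{P}(\sigma_A,\sigma_B';x,x)\le1/2+\epsilon$. It is a weak coin tossing protocol with bias $\epsilon$ if (i) holds and, for every finite-dimensional observable algebra $\mathcal{R}$, $\mathbb{P}(\sigma_A',\sigma_B;0,0)\le1/2+\epsilon$ for all $\sigma_A'\in\Sigma_A(\mathcal{R},\mathcal{M})$ and $\mathbb{P}(\sigma_A,\sigma_B';1,1)\le1/2+\epsilon$ for all $\sigma_B'\in\Sigma_B(\mathcal{R},\mathcal{M})$. *)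

(* Defs.v *)
From HB Require Import structures.
From mathcomp Require Import all_boot all_order all_algebra.
From mathcomp Require Import complex reals.
Set Implicit Arguments. Unset Strict Implicit. Unset Printing Implicit Defensive.
Import Order.TTheory GRing.Theory Num.Theory.
Local Open Scope ring_scope.

Section CoinTossing.
Variable R : realType.
Local Notation C := R[i].

Definition op (I : finType) := I -> I -> C.

Definition optr (I : finType) (A : op I) : C := \sum_(i : I) A i i.
Definition opmul (I : finType) (A B : op I) : op I :=
  fun i j => \sum_(k : I) A i k * B k j.
Definition opone (I : finType) : op I := fun i j => (i == j)%:R.
Definition psd (I : finType) (A : op I) : Prop :=
  forall v : I -> C, 0 <= \sum_(i : I) \sum_(j : I) (v i)^* * A i j * v j.

(* ---------- observable algebras ----------
   An algebra is described by an index type aI (an orthonormal basis of the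
   underlying Hilbert space) and a "classical label" akey : aI -> aK; the
   algebra consists of the operators that are block diagonal w.r.t. akey.
   B(H) (x) C(X) with H = C^H, X finite is  aI = H * X, akey = snd, and
   tensor products of such algebras are obtained with [tens]. *)
Record alg := Alg { aI : finType; aK : finType; akey : aI -> aK }.

Definition inA (a : alg) (A : op (aI a)) : Prop :=
  forall i j, akey i != akey j -> A i j = 0.

(* B(C^H) (x) C(X), viewed in B(C^H (x) C^X) *)
Definition obs (H X : finType) : alg := @Alg (H * X)%type X snd.
(* the classical algebra C(X) (dim H = 1) *)
Definition cl (X : finType) : alg := obs unit X.
Definition tens (a b : alg) : alg :=
  @Alg (aI a * aI b)%type (aK a * aK b)%type (fun p => (akey p.1, akey p.2)).

Definition state (a : alg) (rho : op (aI a)) : Prop :=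
  [/\ inA rho, psd rho & optr rho = 1].

(* the (k,l) block of an element of M_n(A) = M_n (x) A *)
Definition blk (n : nat) (I : finType) (P : op ('I_n * I)%type) (k l : 'I_n) : op I :=
  fun i j => P (k, i) (l, j).

(* operations: completely positive trace-preserving linear maps a -> b
   (only the restriction to the algebra a matters) *)
Definition operation (a b : alg) (T : op (aI a) -> op (aI b)) : Prop :=
  [/\ (forall A, inA A -> inA (T A)),
      (forall (c : C) A B, inA A -> inA B ->
          T (fun i j => c * A i j + B i j) = (fun i j => c * T A i j + T B i j)),
      (forall A, inA A -> optr (T A) = optr A) &
      (forall (n : nat) (P : op ('I_n * aI a)%type),
          (forall k l, inA (blk P k l)) -> psd P ->
          psd (fun p q => T (blk P p.1 q.1) p.2 q.2))].

(* outcomes {0,1,emptyset} are encoded as Some false, Some true, None *)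
Definition outcome := option bool.

Definition observable (a : alg) (E : outcome -> op (aI a)) : Prop :=
  (forall o, inA (E o) /\ psd (E o)) /\
  (fun i j => \sum_(o : outcome) E o i j) = @opone (aI a).

(* ---------- strategies (N = 2 n rounds) ----------
   Alice's operations T_A^(2), ..., T_A^(2n) are TA 0, ..., TA (n-1);
   Bob's operations T_B^(1), ..., T_B^(2n-1) are TB 0, ..., TB (n-1). *)
Record stratA (a m : alg) := StratA {
  rhoA : op (aI a * aI m)%type;
  TA : nat -> op (aI a * aI m)%type -> op (aI a * aI m)%type;
  EA : outcome -> op (aI a) }.

Record stratB (b m : alg) := StratB {
  rhoB : op (aI b);
  TB : nat -> op (aI m * aI b)%type -> op (aI m * aI b)%type;
  EB : outcome -> op (aI b) }.

Definition isStratA (n : nat) (a m : alg) (s : stratA a m) : Prop :=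
  [/\ state (a := tens a m) (rhoA s),
      (forall k, (k < n)%N -> operation (a := tens a m) (b := tens a m) (TA s k)) &
      observable (EA s)].

Definition isStratB (n : nat) (b m : alg) (s : stratB b m) : Prop :=
  [/\ state (rhoB s),
      (forall k, (k < n)%N -> operation (a := tens m b) (b := tens m b) (TB s k)) &
      observable (EB s)].

Section Evolution.
Variables (IA IM IB : finType).

(* T (x) Id_B  on  (A (x) M) (x) B *)
Definition liftA (T : op (IA * IM)%type -> op (IA * IM)%type)
  (X : op ((IA * IM) * IB)%type) : op ((IA * IM) * IB)%type :=
  fun p q => T (fun u v => X (u, p.2) (v, q.2)) p.1 q.1.

(* Id_A (x) T  on  (A (x) M) (x) B *)
Definition liftB (T : op (IM * IB)%type -> op (IM * IB)%type)
  (X : op ((IA * IM) * IB)%type) : op ((IA * IM) * IB)%type :=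
  fun p q => T (fun u v => X ((p.1.1, u.1), u.2) ((q.1.1, v.1), v.2))
               (p.1.2, p.2) (q.1.2, q.2).

End Evolution.

Section Run.
Variables (a m b : alg) (sA : stratA a m) (sB : stratB b m).

Definition rho0 : op ((aI a * aI m) * aI b)%type :=
  fun p q => rhoA sA p.1 q.1 * rhoB sB p.2 q.2.

(* evol k = (T_A^(2k) (x) Id)(Id (x) T_B^(2k-1)) ... (T_A^(2) (x) Id)(Id (x) T_B^(1)) rho0 *)
Fixpoint evol (k : nat) : op ((aI a * aI m) * aI b)%type :=
  match k with
  | 0 => rho0
  | k'.+1 => liftA (TA sA k') (liftB (TB sB k') (evol k'))
  end.

(* P(sigma_A, sigma_B; x, y) = tr[(E_A^(x) (x) 1 (x) E_B^(y)) rho^(N)],  N = 2 n *)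
Definition prob (n : nat) (x y : outcome) : C :=
  optr (opmul (fun p q => EA sA x p.1.1 q.1.1 * (p.1.2 == q.1.2)%:R * EB sB y p.2 q.2)
              (evol n)).
End Run.

Definition half : C := 2%:R^-1.

Definition weakCT (n : nat) (a b m : alg) (sA : stratA a m) (sB : stratB b m)
  (eps : R) : Prop :=
  [/\ 0 <= eps <= 2%:R^-1,
      prob sA sB n (Some false) (Some false) = half,
      prob sA sB n (Some true) (Some true) = half,
      (forall (H X : finType) (sA' : stratA (obs H X) m), isStratA n sA' ->
          prob sA' sB n (Some false) (Some false) <= half + (eps%:C)%C) &
      (forall (H X : finType) (sB' : stratB (obs H X) m), isStratB n sB' ->
          prob sA sB' n (Some true) (Some true) <= half + (eps%:C)%C)].

Definition strongCT (n : nat) (a b m : alg) (sA : stratA a m) (sB : stratB b m)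
  (eps : R) : Prop :=
  [/\ 0 <= eps <= 2%:R^-1,
      prob sA sB n (Some false) (Some false) = half,
      prob sA sB n (Some true) (Some true) = half,
      (forall (H X : finType) (sA' : stratA (obs H X) m) (x : bool), isStratA n sA' ->
          prob sA' sB n (Some x) (Some x) <= half + (eps%:C)%C) &
      (forall (H X : finType) (sB' : stratB (obs H X) m) (x : bool), isStratB n sB' ->
          prob sA sB' n (Some x) (Some x) <= half + (eps%:C)%C)].

End CoinTossing.

(* Main.v *)
Require Import Defs.
From HB Require Import structures.
From mathcomp Require Import all_boot all_order all_algebra.
From mathcomp Require Import complex reals.
From Stdlib Require Import FunctionalExtensionality.
From mathcomp Require Import ring lra.
Import Order.TTheory GRing.Theory Num.Theory.
Local Open Scope ring_scope.

Module Helpers.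
Set Implicit Arguments. Unset Strict Implicit. Unset Printing Implicit Defensive.

Section Aux.
Variable R : realType.

Lemma sum_ind (I : finType) (j : I) (F : I -> R) :
  \sum_i (i == j)%:R * F i = F j.
Proof.
rewrite (bigD1 j) //= eqxx mul1r big1 ?addr0 // => i /negbTE ->.
by rewrite mul0r.
Qed.

Lemma sum_indr (I : finType) (j : I) (F : I -> R) :
  \sum_i F i * (i == j)%:R = F j.
Proof. by rewrite -[RHS](sum_ind j); apply: eq_bigr => i _; rewrite mulrC. Qed.

Lemma sum2 (A B : finType) (F : A * B -> R) :
  \sum_p F p = \sum_a \sum_b F (a, b).
Proof. by rewrite pair_bigA; apply: eq_bigr => -[]. Qed.

Lemma sum3 (A M B : finType) (F : (A * M) * B -> R) :
  \sum_p F p = \sum_a \sum_m \sum_b F ((a, m), b).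
Proof. by rewrite sum2 (sum2 (fun x => \sum_b F (x, b))). Qed.

End Aux.

Section Game.
Variable R : realType.
Variables A M B : finType.
Variable n : nat.
Variable d0 : M.
Variable kA : nat -> A * M -> A * M -> R.
Variable kB : nat -> M * B -> M * B -> R.
Variables (eA0 eA1 : A -> R) (eB0 eB1 : B -> R).

Definition wB k m m' (v : B -> R) b' := \sum_b v b * kB k (m, b) (m', b').
Definition zA k m' m'' (u : A -> R) a'' := \sum_a u a * kA k (a, m') (a'', m'').
Definition amax (F : M -> R) : M := Order.arg_max d0 xpredT F.

Lemma amax_ge (F : M -> R) m : F m <= F (amax F).
Proof. by rewrite /amax; case: arg_maxP => // i _ H; apply: H. Qed.

Fixpoint VA j k m (v : B -> R) : R :=
  match j with
  | 0 => \sum_b v b * eB0 b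
  | j'.+1 => \sum_m' VA j' k.+1 (amax (fun m'' => VA j' k.+1 m'' (wB k m m' v))) (wB k m m' v)
  end.

Fixpoint VB j k m (u : A -> R) : R :=
  match j with
  | 0 => \sum_a u a * eA1 a
  | j'.+1 => let G m' := \sum_m'' VB j' k.+1 m'' (zA k m' m'' u) in G (amax G)
  end.

Definition D := (A * M * B)%type.
Definition stepB k (d : D -> R) (p : D) : R :=
  \sum_(x : M * B) d ((p.1.1, x.1), x.2) * kB k x (p.1.2, p.2).
Definition stepA k (d : D -> R) (p : D) : R :=
  \sum_(y : A * M) d (y, p.2) * kA k y p.1.
Definition step k d := stepA k (stepB k d).

Definition gval (p : D) := eA0 p.1.1 * eB0 p.2 + eA1 p.1.1 * eB1 p.2.

Fixpoint Hd j k (d : D -> R) : R :=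
  match j with
  | 0 => \sum_p d p * gval p
  | j'.+1 => Hd j' k.+1 (step k d)
  end.

Definition prodv (u : A -> R) m (v : B -> R) (p : D) :=
  u p.1.1 * (p.1.2 == m)%:R * v p.2.

Definition tot (T : finType) (f : T -> R) := \sum_x f x.

Lemma step_sum k (I : finType) (f : I -> D -> R) :
  step k (fun p => \sum_i f i p) = fun p => \sum_i step k (f i) p.
Proof.
rewrite /step /stepA /stepB; apply: functional_extensionality => p /=.
transitivity (\sum_y \sum_i (\sum_x f i ((y.1, x.1), x.2) * kB k x (y.2, p.2)) * kA k y p.1).
  apply: eq_bigr => y _; rewrite -mulr_suml; congr (_ * _).
  rewrite exchange_big; apply: eq_bigr => x _; by rewrite mulr_suml.
by rewrite exchange_big.
Qed.

Lemma Hd_sum j k (I : finType) (f : I -> D -> R) :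
  Hd j k (fun p => \sum_i f i p) = \sum_i Hd j k (f i).
Proof.
elim: j k f => [|j IH] k f /=.
  rewrite (eq_bigr (fun p => \sum_i f i p * gval p)); first by rewrite exchange_big.
  by move=> p _; rewrite mulr_suml.
by rewrite step_sum IH.
Qed.

Lemma step_prod k u m v :
  step k (prodv u m v) =
  fun p => \sum_m' \sum_m'' prodv (zA k m' m'' u) m'' (wB k m m' v) p.
Proof.
apply: functional_extensionality => p; rewrite /step /stepA /stepB /prodv /=.
have E1 : forall y : A * M, \sum_(x : M * B) u y.1 * (x.1 == m)%:R * v x.2 * kB k x (y.2, p.2)
   = u y.1 * wB k m y.2 v p.2.
  move=> y; rewrite sum2 /= (eq_bigr (fun m0 => (m0 == m)%:R * (u y.1 * \sum_b v b * kB k (m0, b) (y.2, p.2)))).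
    by rewrite sum_ind.
  move=> m0 _; rewrite mulr_sumr mulr_sumr; apply: eq_bigr => b _.
  by ring.
rewrite (eq_bigr (fun y => u y.1 * wB k m y.2 v p.2 * kA k y p.1)); last by move=> y _; rewrite E1.
rewrite sum2 exchange_big /=; apply: eq_bigr => m' _.
rewrite (eq_bigr (fun m'' => (m'' == p.1.2)%:R * (zA k m' m'' u p.1.1 * wB k m m' v p.2))).
  rewrite sum_ind /zA mulr_suml; apply: eq_bigr => a _.
  by rewrite -surjective_pairing; ring.
by move=> m'' _; rewrite eq_sym; ring.
Qed.

Hypothesis kA_ge0 : forall k x y, (k < n)%N -> 0 <= kA k x y.
Hypothesis kB_ge0 : forall k x y, (k < n)%N -> 0 <= kB k x y.
Hypothesis kA_sum : forall k x, (k < n)%N -> \sum_y kA k x y = 1.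
Hypothesis kB_sum : forall k x, (k < n)%N -> \sum_y kB k x y = 1.
Hypothesis eA0_ge0 : forall a, 0 <= eA0 a.
Hypothesis eA1_ge0 : forall a, 0 <= eA1 a.
Hypothesis eB0_ge0 : forall b, 0 <= eB0 b.
Hypothesis eB1_ge0 : forall b, 0 <= eB1 b.
Hypothesis eA_le1 : forall a, eA0 a + eA1 a <= 1.
Hypothesis eB_le1 : forall b, eB0 b + eB1 b <= 1.

Lemma wB_ge0 k m m' v b : (k < n)%N -> (forall b, 0 <= v b) -> 0 <= wB k m m' v b.
Proof. by move=> kn v0; apply: sumr_ge0 => x _; apply: mulr_ge0 => //; apply: kB_ge0. Qed.

Lemma zA_ge0 k m' m'' u a : (k < n)%N -> (forall a, 0 <= u a) -> 0 <= zA k m' m'' u a.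
Proof. by move=> kn u0; apply: sumr_ge0 => x _; apply: mulr_ge0 => //; apply: kA_ge0. Qed.

Lemma wB_tot k m v : (k < n)%N -> \sum_m' tot (wB k m m' v) = tot v.
Proof.
move=> kn; rewrite /tot /wB.
transitivity (\sum_b v b * \sum_(y : M * B) kB k (m, b) y); last first.
  by apply: eq_bigr => b _; rewrite kB_sum // mulr1.
rewrite (eq_bigr (fun m' => \sum_b v b * \sum_b' kB k (m, b) (m', b'))); last first.
  move=> m' _; rewrite exchange_big; apply: eq_bigr => b _; by rewrite mulr_sumr.
rewrite exchange_big; apply: eq_bigr => b _; rewrite -mulr_sumr sum2 //.
Qed.

Lemma zA_tot k m' u : (k < n)%N -> \sum_m'' tot (zA k m' m'' u) = tot u.
Proof.
move=> kn; rewrite /tot /zA.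
transitivity (\sum_a u a * \sum_(y : A * M) kA k (a, m') y); last first.
  by apply: eq_bigr => a _; rewrite kA_sum // mulr1.
rewrite (eq_bigr (fun m'' => \sum_a u a * \sum_a'' kA k (a, m') (a'', m''))); last first.
  move=> m'' _; rewrite exchange_big; apply: eq_bigr => a _; by rewrite mulr_sumr.
rewrite exchange_big; apply: eq_bigr => a _; rewrite -mulr_sumr sum2 exchange_big //.
Qed.

Lemma Hd_step k j u m v :
  Hd j.+1 k (prodv u m v) =
  \sum_m' \sum_m'' Hd j k.+1 (prodv (zA k m' m'' u) m'' (wB k m m' v)).
Proof.
rewrite /= step_prod (Hd_sum j k.+1 (fun m' p => \sum_m'' prodv (zA k m' m'' u) m'' (wB k m m' v) p)).
by apply: eq_bigr => m' _; rewrite Hd_sum.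
Qed.

Lemma prodv_tot u m v : \sum_p prodv u m v p = tot u * tot v.
Proof.
rewrite sum3 /tot mulr_suml; apply: eq_bigr => a _.
rewrite (eq_bigr (fun m0 => (m0 == m)%:R * (u a * \sum_b v b))); first by rewrite sum_ind.
move=> m0 _; rewrite /prodv /= mulr_sumr mulr_sumr; apply: eq_bigr => b _; ring.
Qed.

Lemma Hd0_prod k u m v : (forall a, 0 <= u a) -> (forall b, 0 <= v b) ->
  Hd 0 k (prodv u m v) <= tot u * tot v.
Proof.
move=> u0 v0 /=; rewrite -(prodv_tot u m v).
apply: ler_sum => p _; rewrite /prodv /gval.
have h0 : 0 <= u p.1.1 * (p.1.2 == m)%:R * v p.2.
  by rewrite !mulr_ge0.
rewrite -[X in _ <= X]mulr1; apply: ler_wpM2l => //.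
have := eA_le1 p.1.1; have := eB_le1 p.2.
have := eA0_ge0 p.1.1; have := eA1_ge0 p.1.1; have := eB0_ge0 p.2; have := eB1_ge0 p.2.
move=> *; nra.
Qed.

Lemma Hd_le j k u m v : (k + j <= n)%N -> (forall a, 0 <= u a) -> (forall b, 0 <= v b) ->
  Hd j k (prodv u m v) <= tot u * tot v.
Proof.
elim: j k u m v => [|j IH] k u m v kjn u0 v0; first exact: Hd0_prod.
have kn : (k < n)%N by rewrite addnS in kjn; apply: leq_trans kjn; rewrite ltnS leq_addr.
rewrite Hd_step.
apply: (@le_trans _ _ (\sum_m' \sum_m'' tot (zA k m' m'' u) * tot (wB k m m' v))).
  apply: ler_sum => m' _; apply: ler_sum => m'' _; apply: IH.
  - by rewrite addSnnS.
  - by move=> a; apply: zA_ge0.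
  - by move=> b; apply: wB_ge0.
rewrite -(wB_tot m v kn) mulr_sumr; apply: ler_sum => m' _ .
by rewrite -mulr_suml zA_tot.
Qed.

Lemma Hd0_val k u m v : Hd 0 k (prodv u m v) =
  (\sum_a u a * eA0 a) * (\sum_b v b * eB0 b) + (\sum_a u a * eA1 a) * (\sum_b v b * eB1 b).
Proof.
rewrite /= sum3 !mulr_suml -big_split /=; apply: eq_bigr => a _.
rewrite (eq_bigr (fun m0 => (m0 == m)%:R * \sum_b u a * v b * gval ((a, m), b))).
  rewrite sum_ind /gval !mulr_sumr -big_split /=; apply: eq_bigr => b _; ring.
move=> m0 _; rewrite mulr_sumr; apply: eq_bigr => b _; rewrite /prodv /gval /=.
ring.
Qed.

Lemma dich j k u m v : (k + j <= n)%N -> (forall a, 0 <= u a) -> (forall b, 0 <= v b) ->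
  Hd j k (prodv u m v) = tot u * tot v ->
  tot v <= VA j k m v \/ tot u <= VB j k m u.
Proof.
elim: j k u m v => [|j IH] k u m v kjn u0 v0.
  rewrite Hd0_val /=.
  set p0 := \sum_a u a * eA0 a; set p1 := \sum_a u a * eA1 a.
  set P := \sum_b v b * eB0 b; set Q := \sum_b v b * eB1 b.
  move=> E.
  have hp0 : 0 <= p0 by apply: sumr_ge0 => a _; apply: mulr_ge0.
  have hp1 : 0 <= p1 by apply: sumr_ge0 => a _; apply: mulr_ge0.
  have hP : 0 <= P by apply: sumr_ge0 => a _; apply: mulr_ge0.
  have hQ : 0 <= Q by apply: sumr_ge0 => a _; apply: mulr_ge0.
  have hU : p0 + p1 <= tot u.
    rewrite /p0 /p1 -big_split /tot; apply: ler_sum => a _ /=.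
    have := eA_le1 a; have := u0 a; have := eA0_ge0 a; have := eA1_ge0 a; move=> *; nra.
  have hV : P + Q <= tot v.
    rewrite /P /Q -big_split /tot; apply: ler_sum => a _ /=.
    have := eB_le1 a; have := v0 a; have := eB0_ge0 a; have := eB1_ge0 a; move=> *; nra.
  clearbody p0 p1 P Q.
  case: (lerP (tot v) P) => hv; first by left.
  right; case: (lerP (tot u) p1) => // hu.
  exfalso.
  have h1 : 0 < (tot u - p1) * (tot v - P) by apply: mulr_gt0; rewrite subr_gt0.
  have h2 : p1 * Q <= p1 * (tot v - P) by apply: ler_wpM2l => //; lra.
  have h3 : p0 * P <= (tot u - p1) * P by apply: ler_wpM2r => //; lra.
  have h4 : 0 <= p1 * P by apply: mulr_ge0.
  lra.
have kn : (k < n)%N by rewrite addnS in kjn; apply: leq_trans kjn; rewrite ltnS leq_addr.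
have kjn' : (k.+1 + j <= n)%N by rewrite addSnnS.
rewrite Hd_step => E.
set z := fun m' m'' => zA k m' m'' u.
set w := fun m' => wB k m m' v.
have z0 : forall m' m'' a, 0 <= z m' m'' a by move=> *; apply: zA_ge0.
have w0 : forall m' b, 0 <= w m' b by move=> *; apply: wB_ge0.
have Hle : forall m' m'', Hd j k.+1 (prodv (z m' m'') m'' (w m')) <= tot (z m' m'') * tot (w m').
  by move=> m' m''; apply: Hd_le.
have Heq : forall m' m'', Hd j k.+1 (prodv (z m' m'') m'' (w m')) = tot (z m' m'') * tot (w m').
  have S : \sum_m' \sum_m'' (tot (z m' m'') * tot (w m') - Hd j k.+1 (prodv (z m' m'') m'' (w m'))) = 0.
    rewrite (eq_bigr (fun m' => \sum_m'' tot (z m' m'') * tot (w m') -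
                       \sum_m'' Hd j k.+1 (prodv (z m' m'') m'' (w m')))); last first.
      by move=> m' _; rewrite sumrB.
    rewrite sumrB E -(wB_tot m v kn) mulr_sumr.
    rewrite (eq_bigr (fun m' => tot u * tot (w m'))) ?subrr // => m' _.
    by rewrite -mulr_suml zA_tot.
  move=> m' m''.
  have S1 : \sum_m'' (tot (z m' m'') * tot (w m') - Hd j k.+1 (prodv (z m' m'') m'' (w m'))) = 0.
    apply: (psumr_eq0P _ S) => // i _; apply: sumr_ge0 => i' _; rewrite subr_ge0; exact: Hle.
  have := psumr_eq0P (P := xpredT) _ S1 (i := m'') isT.
  move=> /(_ _)/eqP; rewrite subr_eq0 => /(_ _)/eqP ->; first by [].
  by move=> i _; rewrite subr_ge0; exact: Hle.
case: (lerP (tot u) (VB j.+1 k m u)) => hB; first by right.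
left.
have key : forall m', exists m'', tot (w m') <= VA j k.+1 m'' (w m').
  move=> m'.
  have hG : \sum_m'' VB j k.+1 m'' (z m' m'') < \sum_m'' tot (z m' m'').
    rewrite zA_tot //; apply: le_lt_trans hB => /=.
    exact: (amax_ge (fun m' => \sum_m'' VB j k.+1 m'' (zA k m' m'' u)) m').
  have : ~~ [forall m'', tot (z m' m'') <= VB j k.+1 m'' (z m' m'')].
    apply/negP => /forallP hall.
    by move: hG; rewrite ltNge ler_sum // => i _; apply: hall.
  case/forallPn => m2 /negP hm2.
  exists m2.
  case: (IH k.+1 (z m' m2) m2 (w m') kjn' (z0 m' m2) (w0 m') (Heq m' m2)) => [//|h].
  by exfalso; apply: hm2.
rewrite /= -(wB_tot m v kn); apply: ler_sum => m' _.
have [m2 hm2] := key m'.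
apply: le_trans hm2 _.
exact: (amax_ge (fun m'' => VA j k.+1 m'' (wB k m m' v)) m2).
Qed.

Variables (rA : A * M -> R) (rB : B -> R).
Hypothesis rA_ge0 : forall x, 0 <= rA x.
Hypothesis rB_ge0 : forall b, 0 <= rB b.
Hypothesis rA_sum : \sum_x rA x = 1.
Hypothesis rB_sum : \sum_b rB b = 1.

Fixpoint devol k : D -> R :=
  if k is k'.+1 then step k' (devol k') else fun p => rA p.1 * rB p.2.

Lemma Hd_devol j k : Hd j k (devol k) = Hd 0 (k + j) (devol (k + j)).
Proof. by elim: j k => [|j IH] k; rewrite ?addn0 //= IH addSnnS. Qed.

Lemma devol0_sum : devol 0 = fun p => \sum_m0 prodv (fun a => rA (a, m0)) m0 rB p.
Proof.
apply: functional_extensionality => -[[a m] b] /=.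
rewrite (eq_bigr (fun m0 => (m0 == m)%:R * (rA (a, m0) * rB b))); first by rewrite sum_ind.
by move=> m0 _; rewrite /prodv /= eq_sym; ring.
Qed.

Theorem classical_main :
  \sum_p devol n p * gval p = 1 ->
  (exists m0, 1 <= VA n 0 m0 rB) \/ 1 <= \sum_m0 VB n 0 m0 (fun a => rA (a, m0)).
Proof.
move=> H1.
have E : \sum_m0 Hd n 0 (prodv (fun a => rA (a, m0)) m0 rB) = 1.
  by rewrite -Hd_sum -devol0_sum Hd_devol.
have totA : \sum_m0 tot (fun a => rA (a, m0)) = 1.
  by rewrite /tot exchange_big -sum2.
have Hle : forall m0, Hd n 0 (prodv (fun a => rA (a, m0)) m0 rB) <= tot (fun a => rA (a, m0)) * tot rB.
  by move=> m0; apply: Hd_le.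
have Heq : forall m0, Hd n 0 (prodv (fun a => rA (a, m0)) m0 rB) = tot (fun a => rA (a, m0)) * tot rB.
  have S : \sum_m0 (tot (fun a => rA (a, m0)) * tot rB - Hd n 0 (prodv (fun a => rA (a, m0)) m0 rB)) = 0.
    rewrite sumrB E (eq_bigr (fun m0 => tot (fun a => rA (a, m0)))); first by rewrite totA subrr.
    by move=> m0 _; rewrite /tot rB_sum mulr1.
  move=> m0; have := psumr_eq0P (P := xpredT) _ S (i := m0) isT.
  move=> /(_ _)/eqP; rewrite subr_eq0 => /(_ _)/eqP ->; first by [].
  by move=> i _; rewrite subr_ge0; exact: Hle.
case: (boolP [exists m0, 1 <= VA n 0 m0 rB]) => [/existsP [m0 h]|/existsPn hn].
  by left; exists m0.
right; rewrite -totA; apply: ler_sum => m0 _.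
have [h|h] := dich (j := n) (k := 0) (u := fun a => rA (a, m0)) (m := m0) (v := rB)
  (leqnn n) (fun a => rA_ge0 _) rB_ge0 (Heq m0); last by [].
by move: (hn m0); move: h; rewrite /tot rB_sum => ->.
Qed.

End Game.


Ltac gencasts := repeat match goal with |- context [ (nat_of_bool ?b)%:R ] =>
  let x := fresh "c" in set x := (nat_of_bool b)%:R; clearbody x end.
Ltac gring := gencasts; ring.

Section Hist.
Variable R : realType.
Variable M : finType.
Variable n : nat.
Variable d0 : M.

Lemma sum_unit (F : unit -> R) : \sum_(u : unit) F u = F tt.
Proof. by rewrite (bigD1 tt) //= big_pred0 ?addr0 // => -[]. Qed.

Definition X := {ffun 'I_n -> M}.
Definition upd (h : X) (k : nat) (m : M) : X := [ffun i : 'I_n => if (nat_of_ord i == k) then m else h i].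
Definition geth (h : X) (k : nat) : M :=
  if (insub k : option 'I_n) is Some i then h i else d0.
Definition inT (k : nat) (h : X) : bool := [forall i : 'I_n, (k <= i)%N ==> (h i == d0)].
Definition h0 : X := [ffun _ => d0].
Definition agree (k : nat) (h h' : X) := forall i : 'I_n, (i < k)%N -> h i = h' i.

Lemma geth_upd h k m : (k < n)%N -> geth (upd h k m) k = m.
Proof. by move=> kn; rewrite /geth insubT /= ffunE eqxx. Qed.

Lemma geth_agree k h h' : agree k.+1 h h' -> geth h k = geth h' k.
Proof.
move=> H; rewrite /geth; case: insubP => [i _ ik|_] //; apply: H; by rewrite ik.
Qed.

Lemma agree_upd k h m : agree k (upd h k m) h.
Proof. by move=> i ik; rewrite ffunE (ltn_eqF ik). Qed.

Lemma agree_sym k h h' : agree k h h' -> agree k h' h.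
Proof. by move=> H i ik; rewrite H. Qed.

Lemma agree_trans k h1 h2 h3 : agree k h1 h2 -> agree k h2 h3 -> agree k h1 h3.
Proof. by move=> H1 H2 i ik; rewrite H1 // H2. Qed.

Lemma agreeS k h h' : agree k.+1 h h' -> agree k h h'.
Proof. by move=> H i ik; apply: H; apply: ltnW. Qed.

Lemma inT0 h : inT 0 h = (h == h0).
Proof.
apply/forallP/eqP => [H|->].
  by apply/ffunP => i; rewrite ffunE; move: (H i) => /= /eqP.
by move=> i; rewrite ffunE eqxx implybT.
Qed.

Lemma reindex k (kn : (k < n)%N) h2 (G : X -> M -> R) :
  \sum_h \sum_m' (inT k h)%:R * (upd h k m' == h2)%:R * G h m' =
  (inT k.+1 h2)%:R * G (upd h2 k d0) (geth h2 k).
Proof.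
pose ko : 'I_n := Ordinal kn.
have gk : geth h2 k = h2 ko by rewrite /geth insubT /=; congr (h2 _); apply: val_inj.
have E1 : forall h m', (upd h k m' == h2) = (m' == h2 ko) && (upd h k d0 == upd h2 k d0).
  move=> h m'; apply/eqP/andP => [E|[/eqP -> /eqP E]].
    rewrite -E ffunE eqxx; split => //; apply/eqP/ffunP => i; rewrite !ffunE.
    by case: ifP => // _; rewrite E.
  apply/ffunP => i; move/ffunP: E => /(_ i); rewrite !ffunE.
  by case: ifP => // /eqP ik _; congr (h2 _); apply: val_inj.
have E2 : forall h, inT k h && (upd h k d0 == upd h2 k d0) = (h == upd h2 k d0) && inT k.+1 h2.
  move=> h; apply/andP/andP => [[/forallP Ht /eqP Eu]|[/eqP -> /forallP Ht]].
    split.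
      apply/eqP/ffunP => i; move/ffunP: Eu => /(_ i); rewrite !ffunE.
      case: ifP => // /eqP ik _; move: (Ht i); rewrite ik leqnn /= => /eqP.
      by [].
    apply/forallP => i; apply/implyP => ki.
    move/ffunP: Eu => /(_ i); rewrite !ffunE (gtn_eqF ki) => <-.
    by move: (Ht i) => /implyP; apply; apply: ltnW.
  split.
    apply/forallP => i; apply/implyP; rewrite leq_eqVlt => /orP [/eqP ki|ki].
      by rewrite ffunE -ki eqxx.
    by rewrite ffunE (gtn_eqF ki); move: (Ht i) => /implyP; apply.
  apply/eqP/ffunP => i; rewrite !ffunE; case: ifP => //.
  by move=> ->.
transitivity (\sum_h (inT k h && (upd h k d0 == upd h2 k d0))%:R * G h (h2 ko)).
  apply: eq_bigr => h _.
  rewrite (eq_bigr (fun m' => (m' == h2 ko)%:R * ((inT k h)%:R * (upd h k d0 == upd h2 k d0)%:R * G h m'))).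
    by rewrite sum_ind -mulnb natrM.
  by move=> m' _; rewrite E1 -mulnb natrM; ring.
rewrite (eq_bigr (fun h => (h == upd h2 k d0)%:R * ((inT k.+1 h2)%:R * G h (h2 ko)))).
  by rewrite sum_ind gk.
by move=> h _; rewrite E2 -mulnb natrM; ring.
Qed.

Lemma reindex_sum k (kn : (k < n)%N) (Q : X -> R) :
  \sum_h (inT k h)%:R * \sum_m' Q (upd h k m') = \sum_h2 (inT k.+1 h2)%:R * Q h2.
Proof.
transitivity (\sum_h2 \sum_h \sum_m' (inT k h)%:R * (upd h k m' == h2)%:R * Q h2).
  rewrite exchange_big; apply: eq_bigr => h _; rewrite mulr_sumr exchange_big.
  apply: eq_bigr => m' _; rewrite (eq_bigr (fun h2 => (h2 == upd h k m')%:R * ((inT k h)%:R * Q h2))).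
    by rewrite sum_ind.
  by move=> h2 _; rewrite eq_sym; ring.
by apply: eq_bigr => h2 _; rewrite (reindex kn h2 (fun _ _ => Q h2)).
Qed.

Lemma shift_sum (Q : nat -> X -> R) :
  (forall k h, (k < n)%N -> inT k h -> Q k h = \sum_m Q k.+1 (upd h k m)) ->
  forall k, (k <= n)%N -> \sum_h (inT k h)%:R * Q k h = \sum_h (inT n h)%:R * Q n h.
Proof.
move=> HQ k kn; move: {2}(n - k)%N (erefl (n - k)%N) => j; elim: j k kn => [|j IH] k kn E.
  by have -> : k = n by apply/eqP; rewrite eqn_leq kn /= -subn_eq0 E.
have kn' : (k < n)%N by rewrite -subn_gt0 E.
rewrite -(IH k.+1 kn'); last by rewrite subnS E.
rewrite -reindex_sum //; apply: eq_bigr => h _.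
by case: (boolP (inT k h)) => hk; rewrite ?mul0r ?mul1r // (HQ k h kn' hk).
Qed.

End Hist.

Section CheatA.
Variable R : realType.
Variables M B : finType.
Variable n : nat.
Variables d0 m0 : M.
Variable kB : nat -> M * B -> M * B -> R.
Variable eB0 : B -> R.
Variable rB : B -> R.

Local Notation X := (X M n).
Local Notation geth := (geth d0).
Local Notation inT := (inT d0).
Local Notation h0 := (h0 n d0).
Definition AC := (unit * X)%type.

Fixpoint stA k (h : X) : M * (B -> R) :=
  match k with
  | 0 => (m0, rB)
  | k'.+1 => let v' := wB kB k' (stA k' h).1 (geth h k') (stA k' h).2 in
             (amax d0 (fun m'' => VA d0 kB eB0 (n - k'.+1) k'.+1 m'' v'), v')
  end.

Definition gA k (y : AC * M) : AC * M :=
  ((tt, upd y.1.2 k y.2), (stA k.+1 (upd y.1.2 k y.2)).1).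
Definition kAc k (y z : AC * M) : R := (gA k y == z)%:R.
Definition rAc (x : AC * M) : R := (x == ((tt, h0), m0))%:R.

Lemma stA_agree k h h' : agree k h h' -> stA k h = stA k h'.
Proof.
elim: k => [//|k IH] Ha /=.
by rewrite (IH (agreeS Ha)) (geth_agree d0 Ha).
Qed.

Lemma devolA k : (k <= n)%N -> forall p,
  devol kAc kB rAc rB k p =
  (inT k p.1.1.2)%:R * (p.1.2 == (stA k p.1.1.2).1)%:R * (stA k p.1.1.2).2 p.2.
Proof.
elim: k => [|k IH] kn [[[u h] m] b] /=.
  rewrite /rAc (inT0 d0); case: u; rewrite /=.
  rewrite -pair_eqE /= -pair_eqE /= -mulnb natrM /=.
  by [].

have kn' : (k < n)%N by [].
rewrite /step /stepA /stepB.
have E1 : forall h1 m' b', \sum_(x : M * B) devol kAc kB rAc rB k (((tt, h1), x.1), x.2) * kB k x (m', b')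
    = (inT k h1)%:R * wB kB k (stA k h1).1 m' (stA k h1).2 b'.
  move=> h1 m' b'; rewrite sum2 /=.
  rewrite (eq_bigr (fun m1 => (m1 == (stA k h1).1)%:R * ((inT k h1)%:R * \sum_b1 (stA k h1).2 b1 * kB k (m1, b1) (m', b')))).
    by rewrite sum_ind /wB.
  move=> m1 _; rewrite !mulr_sumr; apply: eq_bigr => b1 _; rewrite IH; last exact: ltnW.
  simpl. gring.
rewrite sum2 (eq_bigr (fun x : AC => \sum_m' (inT k x.2)%:R * wB kB k (stA k x.2).1 m' (stA k x.2).2 b *
           kAc k (x, m') (u, h, m))); last first.
  by move=> x _; apply: eq_bigr => m' _; case: x => [[] h1] /=; rewrite E1.
rewrite sum2 sum_unit /=.
rewrite (eq_bigr (fun h1 => \sum_m' (inT k h1)%:R * (upd h1 k m' == h)%:R *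
          ((m == (stA k.+1 h).1)%:R * wB kB k (stA k h1).1 m' (stA k h1).2 b))); last first.
  move=> h1 _; apply: eq_bigr => m' _; rewrite /kAc /gA /=; case: u.
  rewrite -pair_eqE /= -pair_eqE /=.
  case: (eqVneq (upd h1 k m') h) => [E|E] /=; last by gring.
  by rewrite E /= eq_sym; gring.
rewrite (reindex d0 kn' h (fun h1 m' => (m == (stA k.+1 h).1)%:R * wB kB k (stA k h1).1 m' (stA k h1).2 b)).
rewrite (stA_agree (agree_upd (k:=k) h d0)) /=; gring.
Qed.

Lemma probA : \sum_p devol kAc kB rAc rB n p * eB0 p.2 = VA d0 kB eB0 n 0 m0 rB.
Proof.
pose Q k h := VA d0 kB eB0 (n - k) k (stA k h).1 (stA k h).2.
have HQ : forall k h, (k < n)%N -> inT k h -> Q k h = \sum_m Q k.+1 (upd h k m).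
  move=> k h kn _; rewrite /Q -(subnSK kn) /=; apply: eq_bigr => m' _.
  by rewrite (stA_agree (agree_upd (k:=k) h m')) geth_upd.
have S0 := shift_sum HQ (leq0n n).
transitivity (\sum_h (inT n h)%:R * Q n h); last first.
  rewrite -S0 (eq_bigr (fun h => (h == h0)%:R * Q 0 h)); first by rewrite sum_ind /Q subn0.
  by move=> h _; rewrite (inT0 d0).
rewrite sum3 sum2 sum_unit; apply: eq_bigr => h _.
rewrite /Q subnn /= (eq_bigr (fun m => (m == (stA n h).1)%:R * ((inT n h)%:R * \sum_b (stA n h).2 b * eB0 b))).
  by rewrite sum_ind.
move=> m _; rewrite !mulr_sumr; apply: eq_bigr => b _; rewrite devolA //=; gring.
Qed.

End CheatA.

Section CheatB.
Variable R : realType.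
Variables A M : finType.
Variable n : nat.
Variables d0 : M.
Variable kA : nat -> A * M -> A * M -> R.
Variable eA1 : A -> R.
Variable rA : A * M -> R.

Local Notation X := (X M n).
Local Notation geth := (geth d0).
Local Notation inT := (inT d0).
Local Notation h0 := (h0 n d0).
Definition BC := (unit * X)%type.

Fixpoint stB k (h : X) : A * M -> R :=
  match k with
  | 0 => rA
  | k'.+1 => let u := fun a => stB k' h (a, geth h k') in
             let g := amax d0 (fun m' => \sum_m'' VB d0 kA eA1 (n - k'.+1) k'.+1 m'' (zA kA k' m' m'' u)) in
             fun y => \sum_a u a * kA k' (a, g) y
  end.

Definition GB k (h : X) : M :=
  amax d0 (fun m' => \sum_m'' VB d0 kA eA1 (n - k.+1) k.+1 m''
                 (zA kA k m' m'' (fun a => stB k h (a, geth h k)))).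

Definition gB k (x : M * BC) : M * BC := (GB k (upd x.2.2 k x.1), (tt, upd x.2.2 k x.1)).
Definition kBc k (x y : M * BC) : R := (gB k x == y)%:R.
Definition rBc (x : BC) : R := (x == (tt, h0))%:R.

Lemma stB_agree k h h' : agree k h h' -> stB k h = stB k h'.
Proof.
elim: k => [//|k IH] Ha /=.
by rewrite (IH (agreeS Ha)) (geth_agree d0 Ha).
Qed.

Lemma devolB k : (k <= n)%N -> forall p,
  devol kA kBc rA rBc k p = (inT k p.2.2)%:R * stB k p.2.2 p.1.
Proof.
elim: k => [|k IH] kn [[a m] [u h]] /=.
  rewrite /rBc (inT0 d0); case: u; rewrite -pair_eqE /=; gring.
have kn' : (k < n)%N by [].
rewrite /step /stepA /stepB.
have E1 : forall a1 m' h2, \sum_(x : M * BC) devol kA kBc rA rBc k ((a1, x.1), x.2) * kBc k x (m', (tt, h2))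
    = (inT k.+1 h2)%:R * stB k h2 (a1, geth h2 k) * (GB k h2 == m')%:R.
  move=> a1 m' h2; rewrite sum2 exchange_big /= sum2 sum_unit.
  rewrite (eq_bigr (fun h1 => \sum_m1 (inT k h1)%:R * (upd h1 k m1 == h2)%:R *
          (stB k h1 (a1, m1) * (GB k h2 == m')%:R))); last first.
    move=> h1 _; apply: eq_bigr => m1 _; rewrite IH /=; last exact: ltnW.
    rewrite /kBc /gB /= -pair_eqE /= -pair_eqE /=.
    case: (eqVneq (upd h1 k m1) h2) => [E|E] /=; last by rewrite andbF /=; gring.
    by rewrite E andbT eq_sym; gring.
  rewrite (reindex d0 kn' h2 (fun h1 m1 => stB k h1 (a1, m1) * (GB k h2 == m')%:R)).
  rewrite (stB_agree (agree_upd (k:=k) h2 d0)); gring.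
rewrite sum2; case: u.
rewrite (eq_bigr (fun a1 => \sum_m' (inT k.+1 h)%:R * stB k h (a1, geth h k) * (GB k h == m')%:R *
            kA k (a1, m') (a, m))); last by move=> a1 _; apply: eq_bigr => m' _; rewrite E1.
rewrite mulr_sumr; apply: eq_bigr => a1 _.
rewrite (eq_bigr (fun m' => (m' == GB k h)%:R * ((inT k.+1 h)%:R * stB k h (a1, geth h k) * kA k (a1, m') (a, m)))).
  by rewrite sum_ind /GB; gring.
by move=> m' _; rewrite eq_sym; gring.
Qed.

Lemma probB : \sum_p devol kA kBc rA rBc n p * eA1 p.1.1 = \sum_m VB d0 kA eA1 n 0 m (fun a => rA (a, m)).
Proof.
pose Q k h := \sum_m VB d0 kA eA1 (n - k) k m (fun a => stB k h (a, m)).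
have HQ : forall k h, (k < n)%N -> inT k h -> Q k h = \sum_m Q k.+1 (upd h k m).
  move=> k h kn _; rewrite /Q -(subnSK kn) /=; apply: eq_bigr => m _.
  rewrite (stB_agree (agree_upd (k:=k) h m)) geth_upd //.
have S0 := shift_sum HQ (leq0n n).
transitivity (\sum_h (inT n h)%:R * Q n h); last first.
  rewrite -S0 (eq_bigr (fun h => (h == h0)%:R * Q 0 h)); first by rewrite sum_ind /Q subn0.
  by move=> h _; rewrite (inT0 d0).
rewrite sum2 exchange_big sum2 sum_unit /=; apply: eq_bigr => h _.
rewrite /Q subnn /= mulr_sumr sum2 exchange_big; apply: eq_bigr => m _.
rewrite mulr_sumr; apply: eq_bigr => a _; rewrite devolB //=; gring.
Qed.

End CheatB.



Section Mat.
Variable R : realType.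
Local Notation C := R[i].
Local Notation op := (op R).

Lemma sumC_ind (I : finType) (j : I) (F : I -> C) :
  \sum_i (i == j)%:R * F i = F j.
Proof.
rewrite (bigD1 j) //= eqxx mul1r big1 ?addr0 // => i /negbTE ->.
by rewrite mul0r.
Qed.

Lemma sumC2 (A B : finType) (F : A * B -> C) :
  \sum_p F p = \sum_a \sum_b F (a, b).
Proof. by rewrite pair_bigA; apply: eq_bigr => -[]. Qed.

Lemma reC (z : C) : 0 <= z -> z = (complex.Re z)%:C%C.
Proof. by move=> z0; rewrite {1}(complexE z) ger0_Im // raddf0 mulr0 addr0. Qed.

Definition diag (I : finType) (d : I -> C) : op I := fun i j => (i == j)%:R * d i.
Definition eu (I : finType) (x : I) : op I := diag (fun i => (i == x)%:R).
Definition Tk (I : finType) (T : op I -> op I) (x y : I) : C := T (eu x) y y.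
Definition injkey (a : alg) := injective (@akey a).

Lemma inA_diagP (a : alg) : injkey a -> forall Y : op (aI a),
  inA Y <-> (forall i j, i != j -> Y i j = 0).
Proof.
move=> ia Y; split => H i j ij; apply: H.
  by apply: contra ij => /eqP /ia ->.
by apply: contra ij => /eqP ->.
Qed.

Lemma diag_inA (a : alg) (ia : injkey a) (d : aI a -> C) : inA (diag d).
Proof. by apply/(inA_diagP ia) => i j /negbTE ij; rewrite /diag ij mul0r. Qed.

Lemma injkey_cl (Y : finType) : injkey (cl Y).
Proof. by move=> [[] x] [[] y] /= ->. Qed.

Lemma injkey_tens a b : injkey a -> injkey b -> injkey (tens a b).
Proof. by move=> ia ib [x1 x2] [y1 y2] /= [/ia -> /ib ->]. Qed.

Section Oper.
Variable a : alg.
Hypothesis ia : injkey a.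
Local Notation I := (aI a).
Variable T : op I -> op I.
Hypothesis opT : operation (a := a) (b := a) T.

Lemma inA0 : inA (fun _ _ : I => 0 : C).
Proof. by []. Qed.

Lemma op_lin (c : C) A B : inA A -> inA B ->
  T (fun i j => c * A i j + B i j) = fun i j => c * T A i j + T B i j.
Proof. by case: opT => _ H _ _; apply: H. Qed.

Lemma op0 : T (fun _ _ => 0) = fun _ _ => 0.
Proof.
have := op_lin (-1) inA0 inA0.
have -> : (fun i j : I => (-1 : C) * 0 + 0) = (fun _ _ => 0).
  by apply: functional_extensionality => i; apply: functional_extensionality => j; rewrite mulr0 addr0.
move=> E; apply: functional_extensionality => i; apply: functional_extensionality => j.
have := congr1 (fun f => f i j) E => /=.
by move=> /eqP; rewrite mulN1r addNr => /eqP.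
Qed.

Lemma inA_sum (J : Type) (r : seq J) (d : J -> C) (E : J -> op I) :
  (forall j, inA (E j)) -> inA (fun i k => \sum_(j <- r) d j * E j i k).
Proof. by move=> H i k nk; rewrite big1 // => j _; rewrite H // mulr0. Qed.

Lemma op_sum (J : Type) (r : seq J) (d : J -> C) (E : J -> op I) :
  (forall j, inA (E j)) ->
  T (fun i k => \sum_(j <- r) d j * E j i k) = fun i k => \sum_(j <- r) d j * T (E j) i k.
Proof.
move=> HE; elim: r => [|j r IH].
  have -> : (fun i k : I => \sum_(j <- [::]) d j * E j i k) = (fun _ _ => 0).
    by apply: functional_extensionality => i; apply: functional_extensionality => k; rewrite big_nil.
  rewrite op0; apply: functional_extensionality => i; apply: functional_extensionality => k.
  by rewrite big_nil.
have -> : (fun i k => \sum_(j0 <- j :: r) d j0 * E j0 i k) =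
          (fun i k => d j * E j i k + \sum_(j0 <- r) d j0 * E j0 i k).
  by apply: functional_extensionality => i; apply: functional_extensionality => k; rewrite big_cons.
rewrite op_lin //; last exact: inA_sum.
rewrite IH; apply: functional_extensionality => i; apply: functional_extensionality => k.
by rewrite big_cons.
Qed.

Lemma diag_sum (d : I -> C) : diag d = fun i k => \sum_x d x * eu x i k.
Proof.
apply: functional_extensionality => i; apply: functional_extensionality => k.
rewrite /eu /diag (eq_bigr (fun x => (x == i)%:R * ((i == k)%:R * d x))).
  by rewrite sumC_ind mulrC.
by move=> x _; rewrite [x == i]eq_sym; gring.
Qed.

Lemma op_eu x i k : T (eu x) i k = (i == k)%:R * Tk T x i.
Proof.
case: opT => H _ _ _.
have := H _ (diag_inA ia (fun i => (i == x)%:R)) => /(inA_diagP ia) H'.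
case: (eqVneq i k) => [->|ik]; first by rewrite mul1r.
by rewrite H' // mul0r.
Qed.

Lemma op_diag (d : I -> C) : T (diag d) = diag (fun y => \sum_x d x * Tk T x y).
Proof.
rewrite {1}diag_sum op_sum; last by move=> j; exact: diag_inA.
apply: functional_extensionality => i; apply: functional_extensionality => k.
rewrite /diag mulr_sumr; apply: eq_bigr => x _; rewrite op_eu; gring.
Qed.

Lemma psd_ge0 (J : finType) (Q : op J) y : psd Q -> 0 <= Q y y.
Proof.
move=> /(_ (fun i => (i == y)%:R)).
rewrite (eq_bigr (fun i => (i == y)%:R * \sum_j Q i j * (j == y)%:R)); last first.
  by move=> i _; rewrite mulr_sumr; apply: eq_bigr => j _; rewrite conjC_nat mulrA.
rewrite sumC_ind (eq_bigr (fun j => (j == y)%:R * Q y j)) ?sumC_ind // => j _.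
by rewrite mulrC.
Qed.

Lemma Tk_ge0 x y : 0 <= Tk T x y.
Proof.
case: opT => _ _ _ H.
pose P := fun (p q : ('I_1 * I)%type) => eu x p.2 q.2.
have hb : forall k l, inA (blk P k l) by move=> k l; exact: (diag_inA ia).
have hP : psd P.
  move=> v; rewrite /P /eu /diag.
  set s := \sum_q (q.2 == x)%:R * v q.
  have -> : \sum_p \sum_q (v p)^* * ((p.2 == q.2)%:R * (p.2 == x)%:R) * v q = s^* * s.
    rewrite /s rmorph_sum mulr_suml; apply: eq_bigr => p _.
    rewrite mulr_sumr; apply: eq_bigr => q _.
    rewrite rmorphM rmorph_nat /=.
    case: (eqVneq p.2 x) => [->|px]; first by rewrite eq_sym; gring.
    by rewrite /=; gring.
  by rewrite mulrC mul_conjC_ge0.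
have := psd_ge0 (ord0, y) (H 1%N P hb hP).
by [].
Qed.

Lemma Tk_sum x : \sum_y Tk T x y = 1.
Proof.
case: opT => _ _ H _.
have := H _ (diag_inA ia (fun i => (i == x)%:R)).
rewrite /optr => E; rewrite /Tk E /eu /diag.
rewrite (eq_bigr (fun i => (i == x)%:R * 1)) ?sumC_ind // => i _; by rewrite eqxx mul1r mulr1.
Qed.

End Oper.

Lemma psd_diag (I : finType) (d : I -> C) : (forall i, 0 <= d i) -> psd (diag d).
Proof.
move=> d0 v; rewrite /diag.
rewrite (eq_bigr (fun i => d i * (v i * (v i)^*))).
  by apply: sumr_ge0 => i _; rewrite mulr_ge0 // mul_conjC_ge0.
move=> i _; rewrite (eq_bigr (fun j => (j == i)%:R * ((v i)^* * d i * v j))).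
  by rewrite sumC_ind; ring.
by move=> j _; rewrite [j == i]eq_sym; gring.
Qed.


Lemma Re_ge0 (z : C) : 0 <= z -> 0 <= complex.Re z.
Proof. by move=> z0; rewrite -ler0c -reC. Qed.

Lemma ffext2 (I J : Type) (f g : I -> J -> C) : (forall i j, f i j = g i j) -> f = g.
Proof. by move=> H; apply: functional_extensionality => i; apply: functional_extensionality => j. Qed.

Section Bridge.
Variables (a m b : alg).
Hypotheses (ia : injkey a) (im : injkey m) (ib : injkey b).

Lemma liftB_diag (T : op (aI m * aI b)%type -> op (aI m * aI b)%type)
  (opT : operation (a := tens m b) (b := tens m b) T) (D : (aI a * aI m)%type * aI b -> C) :
  liftB T (diag D) = diag (fun p => \sum_x D ((p.1.1, x.1), x.2) * Tk T x (p.1.2, p.2)).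
Proof.
have imb : injkey (tens m b) by apply: injkey_tens.
apply: ffext2 => -[[a1 m1] b1] [[a2 m2] b2]; rewrite /liftB /=.
case: (eqVneq a1 a2) => [<-|ne].
  have -> : (fun u v : (aI m * aI b)%type => diag D (a1, u.1, u.2) (a1, v.1, v.2)) =
            diag (fun u => D ((a1, u.1), u.2)).
    apply: ffext2 => -[u1 u2] [v1 v2]; by rewrite /diag /= !xpair_eqE eqxx.
  rewrite (op_diag imb opT) /diag /= !xpair_eqE eqxx /=.
  by [].
have -> : (fun u v : (aI m * aI b)%type => diag D (a1, u.1, u.2) (a2, v.1, v.2)) = (fun _ _ => 0).
  apply: ffext2 => -[u1 u2] [v1 v2]; by rewrite /diag /= !xpair_eqE (negbTE ne) mul0r.
rewrite (op0 opT) /diag /= !xpair_eqE (negbTE ne) /=; by rewrite mul0r.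
Qed.

Lemma liftA_diag (T : op (aI a * aI m)%type -> op (aI a * aI m)%type)
  (opT : operation (a := tens a m) (b := tens a m) T) (D : (aI a * aI m)%type * aI b -> C) :
  liftA T (diag D) = diag (fun p => \sum_y D (y, p.2) * Tk T y p.1).
Proof.
have iam : injkey (tens a m) by apply: injkey_tens.
apply: ffext2 => -[x1 b1] [x2 b2]; rewrite /liftA /=.
case: (eqVneq b1 b2) => [<-|ne].
  have -> : (fun u v : (aI a * aI m)%type => diag D (u, b1) (v, b1)) = diag (fun u => D (u, b1)).
    apply: ffext2 => u v; by rewrite /diag /= !xpair_eqE eqxx andbT.
  by rewrite (op_diag iam opT) /diag /= !xpair_eqE eqxx andbT.
have -> : (fun u v : (aI a * aI m)%type => diag D (u, b1) (v, b2)) = (fun _ _ => 0).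
  apply: ffext2 => u v; by rewrite /diag /= !xpair_eqE (negbTE ne) andbF mul0r.
by rewrite (op0 opT) /diag /= !xpair_eqE (negbTE ne) andbF mul0r.
Qed.

Variable n : nat.
Variables (sA : stratA R a m) (sB : stratB R b m).
Hypotheses (HA : isStratA n sA) (HB : isStratB n sB).

Definition kRA k x y := complex.Re (Tk (TA sA k) x y).
Definition kRB k x y := complex.Re (Tk (TB sB k) x y).
Definition rRA x := complex.Re (rhoA sA x x).
Definition rRB x := complex.Re (rhoB sB x x).
Definition dv := devol kRA kRB rRA rRB.

Lemma iam : injkey (tens a m). Proof. exact: injkey_tens. Qed.
Lemma imb : injkey (tens m b). Proof. exact: injkey_tens. Qed.

Lemma opA k : (k < n)%N -> operation (a := tens a m) (b := tens a m) (TA sA k).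
Proof. by case: HA => _ H _; apply: H. Qed.
Lemma opB k : (k < n)%N -> operation (a := tens m b) (b := tens m b) (TB sB k).
Proof. by case: HB => _ H _; apply: H. Qed.

Lemma TkA k x y : (k < n)%N -> Tk (TA sA k) x y = (kRA k x y)%:C%C.
Proof. by move=> kn; apply: reC; apply: (Tk_ge0 iam (opA kn)). Qed.
Lemma TkB k x y : (k < n)%N -> Tk (TB sB k) x y = (kRB k x y)%:C%C.
Proof. by move=> kn; apply: reC; apply: (Tk_ge0 imb (opB kn)). Qed.

Lemma rhoA_diag x y : rhoA sA x y = (x == y)%:R * (rRA x)%:C%C.
Proof.
case: HA => [[H1 H2 _] _ _].
case: (eqVneq x y) => [<-|ne]; first by rewrite mul1r -reC //; apply: psd_ge0.
by rewrite mul0r; move/(inA_diagP iam): H1; apply.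
Qed.

Lemma rhoB_diag x y : rhoB sB x y = (x == y)%:R * (rRB x)%:C%C.
Proof.
case: HB => [[H1 H2 _] _ _].
case: (eqVneq x y) => [<-|ne]; first by rewrite mul1r -reC //; apply: psd_ge0.
by rewrite mul0r; move/(inA_diagP ib): H1; apply.
Qed.

Lemma evol_diag k : (k <= n)%N -> evol sA sB k = diag (fun p => (dv k p)%:C%C).
Proof.
elim: k => [|k IH] kn.
  apply: ffext2 => -[x1 b1] [x2 b2]; rewrite /= /rho0 /diag /= rhoA_diag rhoB_diag xpair_eqE.
  by rewrite rmorphM /= -mulnb natrM; gring.
have kn' : (k < n)%N by [].
have -> : evol sA sB k.+1 = liftA (TA sA k) (liftB (TB sB k) (evol sA sB k)) by [].
rewrite IH; last exact: ltnW.
rewrite (liftB_diag (opB kn')) (liftA_diag (opA kn')).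
congr diag; apply: functional_extensionality => p.
rewrite /dv /= /step /stepA /stepB rmorph_sum; apply: eq_bigr => y _.
rewrite TkA // rmorphM rmorph_sum; congr (_ * _); apply: eq_bigr => x _.
by rewrite TkB // rmorphM.
Qed.

Definition eAr o x := complex.Re (EA sA o x x).
Definition eBr o y := complex.Re (EB sB o y y).

Lemma EA_diag o x : EA sA o x x = (eAr o x)%:C%C.
Proof. by case: HA => _ _ [H _]; apply: reC; case: (H o) => _; apply: psd_ge0. Qed.
Lemma EB_diag o x : EB sB o x x = (eBr o x)%:C%C.
Proof. by case: HB => _ _ [H _]; apply: reC; case: (H o) => _; apply: psd_ge0. Qed.

Lemma prob_eq x y : prob sA sB n x y = (\sum_p eAr x p.1.1 * eBr y p.2 * dv n p)%:C%C.
Proof.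
rewrite /prob evol_diag // /optr rmorph_sum; apply: eq_bigr => p _.
rewrite /opmul /diag (eq_bigr (fun k => (k == p)%:R * (EA sA x p.1.1 k.1.1 * (p.1.2 == k.1.2)%:R * EB sB y p.2 k.2 * (dv n k)%:C%C))).
  by rewrite sumC_ind eqxx mulr1 EA_diag EB_diag !rmorphM.
by move=> k _; gring.
Qed.

Lemma kRA_ge0 k x y : (k < n)%N -> 0 <= kRA k x y.
Proof. by move=> kn; apply: Re_ge0; apply: (Tk_ge0 iam (opA kn)). Qed.
Lemma kRB_ge0 k x y : (k < n)%N -> 0 <= kRB k x y.
Proof. by move=> kn; apply: Re_ge0; apply: (Tk_ge0 imb (opB kn)). Qed.

Lemma kRA_sum k x : (k < n)%N -> \sum_y kRA k x y = 1.
Proof.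
move=> kn; apply: (@complexI R); rewrite rmorph_sum rmorph1 -(Tk_sum iam (opA kn) x).
by apply: eq_bigr => y _; rewrite TkA.
Qed.
Lemma kRB_sum k x : (k < n)%N -> \sum_y kRB k x y = 1.
Proof.
move=> kn; apply: (@complexI R); rewrite rmorph_sum rmorph1 -(Tk_sum imb (opB kn) x).
by apply: eq_bigr => y _; rewrite TkB.
Qed.

Lemma rRA_ge0 x : 0 <= rRA x.
Proof. by case: HA => [[_ H _] _ _]; apply: Re_ge0; apply: psd_ge0. Qed.
Lemma rRB_ge0 x : 0 <= rRB x.
Proof. by case: HB => [[_ H _] _ _]; apply: Re_ge0; apply: psd_ge0. Qed.

Lemma rRA_sum : \sum_x rRA x = 1.
Proof.
case: HA => [[_ H E] _ _]; apply: (@complexI R); rewrite rmorph_sum rmorph1 -E.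
rewrite /optr; apply: eq_bigr => x _; have := psd_ge0 x H; by move/reC => ->.
Qed.
Lemma rRB_sum : \sum_x rRB x = 1.
Proof.
case: HB => [[_ H E] _ _]; apply: (@complexI R); rewrite rmorph_sum rmorph1 -E.
rewrite /optr; apply: eq_bigr => x _; have := psd_ge0 x H; by move/reC => ->.
Qed.

Lemma eAr_ge0 o x : 0 <= eAr o x.
Proof. by case: HA => _ _ [H _]; case: (H o) => _ P; apply: Re_ge0; apply: psd_ge0. Qed.
Lemma eBr_ge0 o x : 0 <= eBr o x.
Proof. by case: HB => _ _ [H _]; case: (H o) => _ P; apply: Re_ge0; apply: psd_ge0. Qed.

Lemma out_le (F : outcome -> R) : (forall o, 0 <= F o) -> F (Some false) + F (Some true) <= \sum_o F o.
Proof.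
move=> F0; rewrite (bigD1 (Some false)) //= (bigD1 (Some true)) //=.
by rewrite addrA lerDl; apply: sumr_ge0 => o _.
Qed.

Lemma eA_le1 x : eAr (Some false) x + eAr (Some true) x <= 1.
Proof.
have S : \sum_o eAr o x = 1.
  case: HA => _ _ [_ E]; apply: (@complexI R); rewrite rmorph_sum.
  rewrite (eq_bigr (fun o => EA sA o x x)); last by move=> o _; rewrite EA_diag.
  have := congr1 (fun f => f x x) E => /= ->.
  by rewrite /opone eqxx rmorph1.
by rewrite -S; apply: out_le => o; apply: eAr_ge0.
Qed.
Lemma eB_le1 x : eBr (Some false) x + eBr (Some true) x <= 1.
Proof.
have S : \sum_o eBr o x = 1.
  case: HB => _ _ [_ E]; apply: (@complexI R); rewrite rmorph_sum.
  rewrite (eq_bigr (fun o => EB sB o x x)); last by move=> o _; rewrite EB_diag.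
  have := congr1 (fun f => f x x) E => /= ->.
  by rewrite /opone eqxx rmorph1.
by rewrite -S; apply: out_le => o; apply: eBr_ge0.
Qed.

End Bridge.


Definition detop (I : finType) (g : I -> I) (D : op I) : op I :=
  diag (fun y => \sum_x (g x == y)%:R * D x x).

Lemma Tk_detop (I : finType) (g : I -> I) x y : Tk (detop g) x y = (g x == y)%:R.
Proof.
rewrite /Tk /detop /diag /eu /diag eqxx mul1r.
rewrite (eq_bigr (fun z => (z == x)%:R * (g z == y)%:R)) ?sumC_ind // => z _.
by rewrite eqxx mul1r mulrC.
Qed.

Lemma detop_op (a : alg) (ia : injkey a) (g : aI a -> aI a) : operation (a := a) (b := a) (detop g).
Proof.
split.
- by move=> A _; apply: diag_inA.
- move=> c A B _ _; apply: ffext2 => i j; rewrite /detop /diag.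
  rewrite (eq_bigr (fun x => c * ((g x == i)%:R * A x x) + (g x == i)%:R * B x x)); last by move=> x _; gring.
  by rewrite big_split /= -mulr_sumr; gring.
- move=> A _; rewrite /optr /detop /diag.
  rewrite (eq_bigr (fun i => \sum_x (g x == i)%:R * A x x)); last by move=> i _; rewrite eqxx mul1r.
  rewrite exchange_big; apply: eq_bigr => x _.
  by rewrite (eq_bigr (fun i => (i == g x)%:R * A x x)) ?sumC_ind // => i _; rewrite eq_sym.
- move=> N P _ PP v.
  have E : \sum_p \sum_q (v p)^* * detop g (blk P p.1 q.1) p.2 q.2 * v q =
     \sum_x \sum_r \sum_s ((r.2 == x)%:R * v (r.1, g x))^* * P r s * ((s.2 == x)%:R * v (s.1, g x)).
    transitivity (\sum_x \sum_k \sum_l (v (k, g x))^* * P (k, x) (l, x) * v (l, g x)); last first.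
      apply: eq_bigr => x _; symmetry; rewrite sumC2; apply: eq_bigr => k _.
      rewrite (eq_bigr (fun i => (i == x)%:R * \sum_l (v (k, g x))^* * P (k, x) (l, x) * v (l, g x))).
        by rewrite sumC_ind.
      move=> i _; rewrite sumC2 mulr_sumr; apply: eq_bigr => l _.
      rewrite (eq_bigr (fun j => (j == x)%:R * ((i == x)%:R * ((v (k, g x))^* * P (k, i) (l, x) * v (l, g x))))).
        rewrite sumC_ind; case: (eqVneq i x) => [->|_] /=; gring.
      move=> j _; rewrite /= rmorphM rmorph_nat.
      case: (eqVneq j x) => [->|_] /=; gring.
    rewrite sumC2.
    transitivity (\sum_k \sum_y \sum_l (v (k, y))^* * (\sum_x (g x == y)%:R * P (k, x) (l, x)) * v (l, y)).
      apply: eq_bigr => k _; apply: eq_bigr => y _; rewrite sumC2; apply: eq_bigr => l _.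
      rewrite (eq_bigr (fun z => (z == y)%:R * ((v (k, y))^* * (\sum_x (g x == y)%:R * P (k, x) (l, x)) * v (l, z)))).
        by rewrite sumC_ind.
      by move=> z _; rewrite /detop /diag /blk /=; rewrite [z == y]eq_sym; gring.
    rewrite exchange_big /=.
    transitivity (\sum_y \sum_k \sum_l \sum_x (g x == y)%:R * ((v (k, y))^* * P (k, x) (l, x) * v (l, y))).
      apply: eq_bigr => y _; apply: eq_bigr => k _; apply: eq_bigr => l _.
      by rewrite mulr_sumr mulr_suml; apply: eq_bigr => x _; gring.
    rewrite exchange_big /=.
    rewrite (eq_bigr (fun k => \sum_x \sum_l (v (k, g x))^* * P (k, x) (l, x) * v (l, g x))).
      by rewrite exchange_big.
    move=> k _; rewrite exchange_big [RHS]exchange_big /=; apply: eq_bigr => l _; rewrite exchange_big /=.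
    apply: eq_bigr => x _.
    by rewrite (eq_bigr (fun y => (y == g x)%:R * ((v (k, y))^* * P (k, x) (l, x) * v (l, y)))) ?sumC_ind // => y _; rewrite eq_sym.
  rewrite E; apply: sumr_ge0 => x _; exact: PP.
Qed.

End Mat.


Section Final.
Variable R : realType.
Local Notation C := R[i].
Local Notation op := (op R).
Variable n : nat.
Variables XA XB XM : finType.
Local Notation M := (aI (cl XM)).
Local Notation XC := (X M n).

Lemma Re_nat (b : bool) : complex.Re ((b : nat)%:R : C) = (b : nat)%:R.
Proof. by case: b. Qed.

Lemma opone_diag (I : finType) : @opone R I = diag (fun _ => 1).
Proof. by apply: ffext2 => i j; rewrite /opone /diag mulr1. Qed.

Lemma obs_single (a : alg) (ia : injkey a) (o0 : outcome) :
  observable (fun o => if o == o0 then @opone R (aI a) else fun _ _ => 0).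
Proof.
split.
  move=> o; case: (o == o0).
    by rewrite opone_diag; split; [apply: diag_inA | apply: psd_diag => i; exact: ler01].
  split => // v; rewrite big1 // => i _; rewrite big1 // => j _; by rewrite mulr0 mul0r.
apply: ffext2 => i j; rewrite (bigD1 o0) //= eqxx big1 ?addr0 // => o /negbTE ->.
by [].
Qed.

Lemma ia_A : injkey (obs unit XC). Proof. exact: (@injkey_cl XC). Qed.
Lemma ia_M : injkey (cl XM). Proof. exact: (@injkey_cl XM). Qed.
Lemma ia_B : injkey (cl XB). Proof. exact: (@injkey_cl XB). Qed.
Lemma ia_AX : injkey (cl XA). Proof. exact: (@injkey_cl XA). Qed.

Lemma state_ind (a : alg) (ia : injkey a) (x0 : aI a) :
  state (diag (fun x => (((x == x0)%:R : R)%:C)%C)).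
Proof.
split.
- exact: diag_inA.
- by apply: psd_diag => i; rewrite ler0c ler0n.
- rewrite /optr /diag (eq_bigr (fun i => (i == x0)%:R * 1)) ?sumC_ind //.
  by move=> i _; rewrite eqxx mul1r rmorph_nat mulr1.
Qed.

Section AC.
Variables (d0 m0 : M).
Variables (kB : nat -> M * aI (cl XB) -> M * aI (cl XB) -> R) (eB0 : aI (cl XB) -> R) (rB : aI (cl XB) -> R).

Definition sAc : stratA R (obs unit XC) (cl XM) :=
  @StratA R (obs unit XC) (cl XM)
    (diag (fun x => ((rAc R d0 m0 x)%:C)%C))
    (fun k => detop (gA d0 m0 kB eB0 rB k))
    (fun o => if o == Some false then @opone R _ else fun _ _ => 0).

Lemma sAc_strat : isStratA n sAc.
Proof.
have iam := injkey_tens ia_A ia_M.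
split.
- exact: (state_ind iam).
- by move=> k _; apply: detop_op.
- exact: (obs_single ia_A).
Qed.

Lemma kRA_sAc : kRA sAc = kAc d0 m0 kB eB0 rB.
Proof.
apply: functional_extensionality => k; apply: functional_extensionality => x.
apply: functional_extensionality => y.
by rewrite /kRA /= Tk_detop /kAc Re_nat.
Qed.

Lemma rRA_sAc : rRA sAc = rAc R d0 m0.
Proof.
apply: functional_extensionality => x.
by rewrite /rRA /= /diag eqxx mul1r /rAc.
Qed.

Lemma eAr_sAc x : eAr sAc (Some false) x = 1.
Proof. by rewrite /eAr /= /opone eqxx. Qed.
End AC.

Section BCh.
Variables (d0 : M).
Variables (kA : nat -> aI (cl XA) * M -> aI (cl XA) * M -> R) (eA1 : aI (cl XA) -> R) (rA : aI (cl XA) * M -> R).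

Definition sBc : stratB R (obs unit XC) (cl XM) :=
  @StratB R (obs unit XC) (cl XM)
    (diag (fun x => ((rBc R d0 x)%:C)%C))
    (fun k => detop (gB d0 kA eA1 rA k))
    (fun o => if o == Some true then @opone R _ else fun _ _ => 0).

Lemma sBc_strat : isStratB n sBc.
Proof.
have imb := injkey_tens ia_M ia_A.
split.
- exact: (state_ind ia_A).
- by move=> k _; apply: detop_op.
- exact: (obs_single ia_A).
Qed.

Lemma kRB_sBc : kRB sBc = kBc d0 kA eA1 rA.
Proof.
apply: functional_extensionality => k; apply: functional_extensionality => x.
apply: functional_extensionality => y.
by rewrite /kRB /= Tk_detop /kBc Re_nat.
Qed.

Lemma rRB_sBc : rRB sBc = rBc R d0.
Proof.
apply: functional_extensionality => x.
by rewrite /rRB /= /diag eqxx mul1r /rBc.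
Qed.

Lemma eBr_sBc x : eBr sBc (Some true) x = 1.
Proof. by rewrite /eBr /= /opone eqxx. Qed.
End BCh.

Section Core.
Variables (sA : stratA R (cl XA) (cl XM)) (sB : stratB R (cl XB) (cl XM)).
Hypotheses (HA : isStratA n sA) (HB : isStratB n sB).

Lemma half_eq : Defs.half R = (((2%:R)^-1 : R)%:C)%C.
Proof. by rewrite /Defs.half fmorphV rmorph_nat. Qed.

Lemma core :
  prob sA sB n (Some false) (Some false) = Defs.half R ->
  prob sA sB n (Some true) (Some true) = Defs.half R ->
  (exists r : R, 1 <= r /\ exists sA' : stratA R (obs unit XC) (cl XM),
      isStratA n sA' /\ prob sA' sB n (Some false) (Some false) = (r%:C)%C)
  \/ (exists r : R, 1 <= r /\ exists sB' : stratB R (obs unit XC) (cl XM),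
      isStratB n sB' /\ prob sA sB' n (Some true) (Some true) = (r%:C)%C).
Proof.
have ia := ia_AX; have im := ia_M; have ib := ia_B.
rewrite !(prob_eq ia im ib HA HB) half_eq => /complexI E0 /complexI E1.
case: (pickP (xpredT : pred M)) => [d0 _|Hno]; last first.
  exfalso; have := rRA_sum HA; rewrite sum2 big1 => [/eqP|a _]; first by rewrite eq_sym oner_eq0.
  by rewrite big1 // => m _; have := Hno m.
have H1 : \sum_p devol (kRA sA) (kRB sB) (rRA sA) (rRB sB) n p *
    gval (eAr sA (Some false)) (eAr sA (Some true)) (eBr sB (Some false)) (eBr sB (Some true)) p = 1.
  rewrite /gval (eq_bigr (fun p => eAr sA (Some false) p.1.1 * eBr sB (Some false) p.2 * dv sA sB n p +
      eAr sA (Some true) p.1.1 * eBr sB (Some true) p.2 * dv sA sB n p)); last by move=> p _; rewrite /dv; ring.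
  by rewrite big_split /= E0 E1; field.
have CM := @classical_main R _ _ _ n d0 (kRA sA) (kRB sB) (eAr sA (Some false)) (eAr sA (Some true))
  (eBr sB (Some false)) (eBr sB (Some true))
  (fun k x y kn => kRA_ge0 ia im HA x y kn) (fun k x y kn => kRB_ge0 im ib HB x y kn)
  (fun k x kn => kRA_sum ia im HA x kn) (fun k x kn => kRB_sum im ib HB x kn)
  (eAr_ge0 HA _) (eAr_ge0 HA _) (eBr_ge0 HB _) (eBr_ge0 HB _) (eA_le1 HA) (eB_le1 HB)
  (rRA sA) (rRB sB) (rRA_ge0 HA) (rRB_ge0 HB) (rRA_sum HA) (rRB_sum HB) H1.
case: CM => [[m0 Hm0]|HB1].
  left; exists (VA d0 (kRB sB) (eBr sB (Some false)) n 0 m0 (rRB sB)); split => //.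
  exists (sAc d0 m0 (kRB sB) (eBr sB (Some false)) (rRB sB)); split; first exact: sAc_strat.
  rewrite (prob_eq ia_A im ib (sAc_strat _ _ _ _ _) HB) /dv kRA_sAc rRA_sAc.
  rewrite -(probA n d0 m0 (kRB sB) (eBr sB (Some false)) (rRB sB)).
  congr (_%:C)%C; apply: eq_bigr => p _; rewrite eAr_sAc; ring.
right; exists (\sum_m VB d0 (kRA sA) (eAr sA (Some true)) n 0 m (fun a => rRA sA (a, m))); split => //.
exists (sBc d0 (kRA sA) (eAr sA (Some true)) (rRA sA)); split; first exact: sBc_strat.
rewrite (prob_eq ia im ia_A HA (sBc_strat _ _ _ _)) /dv kRB_sBc rRB_sBc.
rewrite -(probB n d0 (kRA sA) (eAr sA (Some true)) (rRA sA)).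
congr (_%:C)%C; apply: eq_bigr => p _; rewrite eBr_sBc; ring.
Qed.

End Core.

End Final.


End Helpers.
Import Helpers.

Theorem mainTheorem1 (R : realType) (n : nat) (XA XB XM : finType) (eps : R) :
  eps < 2%:R^-1 ->
  forall (sA : stratA R (cl XA) (cl XM)) (sB : stratB R (cl XB) (cl XM)),
    isStratA n sA -> isStratB n sB ->
    ~ weakCT n sA sB eps /\ ~ strongCT n sA sB eps.
Proof.
move=> heps sA sB HA HB.
have contra : forall r : R, 1 <= r -> ~ ((r%:C)%C <= Defs.half R + (eps%:C)%C).
  by move=> r r1; rewrite half_eq -rmorphD lecR => h; lra.
have key := core HA HB.
split.
- case=> _ E0 E1 HcA HcB.
  case: (key E0 E1) => [[r [r1 [sA' [HA' Hp]]]]|[r [r1 [sB' [HB' Hp]]]]].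
  + by apply: (contra r r1); rewrite -Hp; exact: HcA _ _ sA' HA'.
  + by apply: (contra r r1); rewrite -Hp; exact: HcB _ _ sB' HB'.
- case=> _ E0 E1 HcA HcB.
  case: (key E0 E1) => [[r [r1 [sA' [HA' Hp]]]]|[r [r1 [sB' [HB' Hp]]]]].
  + by apply: (contra r r1); rewrite -Hp; exact: HcA _ _ sA' false HA'.
  + by apply: (contra r r1); rewrite -Hp; exact: HcB _ _ sB' true HB'.
Qed.
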